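(* Let $r\ge2$ be an integer, $n\in\mathbb N$, and $f\in\mathbb W^r$. Classify the indices $j\in\mathbb Z$ as follows: $j$ is of first type if $|f'(x)|\le c_1h^{r-1}$ for all $x\in I_j$; $j$ is of second type if it is not of first type and $|f'(x)|\ge h^{r-1}$ for all $x\in I_j$; all remaining indices are of third type. Then there do not exist $2r-3$ consecutive indices $j,j+1,\dots,j+2r-4$ all of third type (i.e. at most $2r-4$ consecutive indices can be of third type).
   Context: $\mathbb W^{r}$ is the class of $2\pi$-periodic functions whose derivative of order $r-1$ exists and is absolutely continuous and with $|f^{(r)}|\le1$ a.e. on $\mathbb R$. For fixed $n$: $x_j:=-j\pi/n$, $I_j:=[x_j,x_{j-1}]$, $h:=\pi/n$. The constant is $c_1:=\frac{(2r-3)^{r-1}}{(r-1)!}+(r-1)(2r-3)^{r-2}$; it has the property that whenever $g\in\mathbb W^{r-1}$ and there are points $t_\nu\in I_\nu$, $\nu=j,\dots,j+2(r-2)$, with $|g(t_\nu)|\le h^{r-1}$, then $|g(x)|\le c_1h^{r-1}$ on $\bigcup_{\nu=j}^{j+2(r-2)}I_\nu$. *)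

(* Defs.v *)
From HB Require Import structures.
From mathcomp Require Import all_boot all_order all_algebra.
From mathcomp Require Import all_classical all_reals all_analysis.
Set Implicit Arguments. Unset Strict Implicit. Unset Printing Implicit Defensive.
Import Order.TTheory GRing.Theory Num.Theory.
Import numFieldNormedType.Exports.
Local Open Scope classical_set_scope.
Local Open Scope ring_scope.

Definition abs_continuous_on {R : realType} (a b : R) (g : R -> R) : Prop :=
  forall e : R, 0 < e -> exists2 d : R, 0 < d &
    forall (k : nat) (s t : nat -> R),
      (forall i, (i < k)%N -> a <= s i /\ s i <= t i /\ t i <= b) ->
      (forall i, (i.+1 < k)%N -> t i <= s i.+1) ->
      \sum_(i < k) (t i - s i) < d ->
      \sum_(i < k) `|g (t i) - g (s i)| < e.

Definition W_class {R : realType} (r : nat) (f : R -> R) : Prop :=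
  [/\ (forall x : R, f (x + 2 * pi) = f x),
      (forall k : nat, (k < r.-1)%N -> forall x : R, derivable (derive1n k f) x 1),
      (forall a b : R, abs_continuous_on a b (derive1n r.-1 f)) &
      {ae (@lebesgue_measure R), forall x : R,
          derivable (derive1n r.-1 f) x 1 /\ `|derive1n r f x| <= 1}].

Definition hstep {R : realType} (n : nat) : R := pi / n%:R.
Definition xgrid {R : realType} (n : nat) (j : int) : R := - (j%:~R * pi / n%:R).
Definition Igrid {R : realType} (n : nat) (j : int) : set R :=
  `[xgrid n j, xgrid n (j - 1)].

Definition c1 {R : realType} (r : nat) : R :=
  ((2 * r - 3)%N%:R ^+ (r - 1)) / ((r - 1)`!)%:R
  + (r - 1)%N%:R * (2 * r - 3)%N%:R ^+ (r - 2).

Definition first_type {R : realType} (r n : nat) (f : R -> R) (j : int) : Prop :=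
  forall x, x \in Igrid n j -> `|derive1 f x| <= c1 r * hstep n ^+ (r - 1).

Definition second_type {R : realType} (r n : nat) (f : R -> R) (j : int) : Prop :=
  ~ first_type r n f j /\
  forall x, x \in Igrid n j -> hstep n ^+ (r - 1) <= `|derive1 f x|.

Definition third_type {R : realType} (r n : nat) (f : R -> R) (j : int) : Prop :=
  ~ first_type r n f j /\ ~ second_type r n f j.

(* Main.v *)
Require Import Defs.
From HB Require Import structures.
From mathcomp Require Import all_boot all_order all_algebra.
From mathcomp Require Import all_classical all_reals all_analysis.
From mathcomp Require Import ring lra zify.
Set Implicit Arguments. Unset Strict Implicit. Unset Printing Implicit Defensive.
Import Order.TTheory GRing.Theory Num.Theory.
Import numFieldNormedType.Exports.
Local Open Scope classical_set_scope.
Local Open Scope ring_scope.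

Section Cousin.
Context {R : realType}.

Definition fine_part (G : R -> R -> Prop) (a y : R) m (x t : nat -> R) :=
  [/\ x 0%N = a, x m = y & forall i, (i < m)%N -> [/\ x i <= t i, t i <= x i.+1 &
     exists2 e, G (t i) e & (t i - x i < e /\ x i.+1 - t i < e)]].

Lemma cousin (a b : R) (G : R -> R -> Prop) : a <= b ->
  (forall x, a <= x <= b -> exists2 e, 0 < e & G x e) ->
  exists m x t, fine_part G a b m x t.
Proof.
move=> ab HG.
pose S := [set y | a <= y <= b /\ exists m x t, fine_part G a y m x t].
have aS : S a.
  split; first by rewrite lexx ab.
  by exists 0%N, (fun=> a), (fun=> a); split.
have hS : has_sup S by split; [exists a | exists b => y [/andP[]]].
set s := sup S.
have ubs := sup_upper_bound hS.
have as_ : a <= s by apply: ubs.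
have sb : s <= b by apply: ge_sup; [exists a | move=> y [/andP[]]].
have [e e0 Ge] := HG s ltac:(by rewrite as_ sb).
have [y [/andP[ay yb] [m [x [t [x0 xm xi]]]]] ys] := sup_adherent e0 hS.
rewrite -/s in ys.
have yles : y <= s by apply: ubs; split; [rewrite ay yb | exists m, x, t].
pose z := Num.min b (s + e / 2).
have sz : s <= z by rewrite le_min sb lerDl divr_ge0 // ltW.
have zS : S z.
  split; first by rewrite (le_trans as_ sz) ge_min lexx.
  exists m.+1, (fun i => if i == m.+1 then z else x i),
         (fun i => if i == m then s else t i).
  split => //=; rewrite ?x0 ?eqxx //.
  move=> i; rewrite ltnS leq_eqVlt => /orP[/eqP ->|im].
    rewrite eqxx (ltn_eqF (ltnSn m)) xm eqxx; split => //.
    exists e => //; split; first by lra.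
    have : z <= s + e / 2 by rewrite /z ge_min lexx orbT.
    by lra.
  rewrite (ltn_eqF im) (ltn_eqF (ltn_trans im (ltnSn m))).
  have: i.+1 != m.+1 by rewrite eqSS ltn_eqF.
  by move/negbTE => ->; apply: xi.
have zs : z <= s by apply: ubs.
suff sb' : s = b.
  have zb : z = b.
    have : z <= b by rewrite /z ge_min lexx.
    by move: sz zs; rewrite sb'; lra.
  by rewrite -zb; case: zS.
apply/eqP; rewrite eq_le sb /=; rewrite leNgt; apply/negP => sltb.
by move: zs; rewrite /z ge_min => /orP[]; lra.
Qed.
End Cousin.
Section LocLip.
Context {R : realType}.
Lemma loc_lip (phi : R -> R) (x eps : R) : derivable phi x 1 -> 0 < eps ->
  exists2 eta, 0 < eta & forall y, `|y - x| < eta ->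
    `|phi y - phi x| <= (`|derive1 phi x| + eps) * `|y - x|.
Proof.
move=> dx e0.
have := dx.
move/cvgrPdist_le => /(_ eps e0).
rewrite near_withinE /= => /nbhs_ballP [eta eta0 Hb].
exists eta => // y yx.
have [->|yx0] := eqVneq y x; first by rewrite !subrr normr0 mulr0.
have hb : ball (0:R) eta (y - x) by rewrite /ball /= sub0r normrN.
have hn : y - x != 0 by rewrite subr_eq0.
move: (Hb _ hb hn) => /=.
rewrite /= scaler1 subrK.
rewrite -[lim _]/('D_1 phi x) -derive1E => H.
set D := derive1 phi x in H *.
set q := (y - x)^-1 *: (phi y - phi x) in H.
have Hq : `|q| <= `|D| + eps.
  have -> : q = D - (D - q) by rewrite opprB addrC subrK.
  by apply: (le_trans (ler_normB _ _)); rewrite lerD2l.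
have -> : phi y - phi x = q * (y - x).
  by rewrite /q /= mulrC mulrA mulfV // mul1r.
by rewrite normrM ler_wpM2r.
Qed.
End LocLip.
Section Meas.
Context {R : realType}.
Local Notation mu := (@lebesgue_measure R).
Lemma sum_bad_le (U : set R) (x : nat -> R) (bad : nat -> bool) (m : nat) :
  open U -> (forall i, (i < m)%N -> x i <= x i.+1) ->
  (forall i, (i < m)%N -> bad i -> `[x i, x i.+1] `<=` U) ->
  ((\sum_(i < m) (if bad i then x i.+1 - x i else 0))%:E <= mu U)%E.
Proof.
move=> oU xinc xbad.
have mU : measurable U by exact: measurable_realfun.open_measurable.
suff H : forall k, (k <= m)%N ->
   ((\sum_(i < k) (if bad i then x i.+1 - x i else 0))%:E <= mu (U `&` `]-oo, x k[))%E.
  apply: (le_trans (H m (leqnn m))); apply: le_measure; rewrite ?inE //.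
  - by apply: measurableI => //; exact: measurable_itv.
elim=> [_|k IH km]; first by rewrite big_ord0 measure_ge0.
rewrite big_ord_recr /= EFinD.
have km' : (k < m)%N by [].
have mA : measurable (U `&` `]-oo, x k[) by apply: measurableI => //; exact: measurable_itv.
have mB : measurable (U `&` `[x k, x k.+1[) by apply: measurableI => //; exact: measurable_itv.
apply: (le_trans (leeD (IH (ltnW km)) (_ : _ <= mu (U `&` `[x k, x k.+1[))%E)).
  case: (bad k) (xbad k km') => [/(_ erefl) sub|_]; last by rewrite measure_ge0.
  have -> : U `&` `[x k, x k.+1[ = `[x k, x k.+1[%classic.
    apply/seteqP; split; first by apply: subIsetr.
    move=> y /= yi; split => //; apply: sub.
    by move: yi; rewrite /= !in_itv /= => /andP[-> /ltW ->].
  rewrite lebesgue_measure_itv /=.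
  case: ltP => [lt|ge].
    by rewrite -EFinB.
  move: ge; rewrite lee_fin => ge.
  have -> : x k.+1 - x k = 0 by have := xinc k km'; lra.
  by [].
rewrite -measureU //; last first.
  apply/seteqP; split => // y [[_ /=]]; rewrite !in_itv /= => y1 [_ /andP[y2 _]].
  by move: y1 y2; lra.
apply: le_measure; rewrite ?inE //.
- exact: measurableU.
- exact: measurableI.
move=> y [[Uy]|[Uy]]; rewrite /= !in_itv /=; split=> //.
  by apply: (lt_le_trans b); apply: xinc.
by case/andP: b.
Qed.
End Meas.

Section Lip.
Context {R : realType}.

Lemma lip_eps (phi : R -> R) (a b eps : R) :
  abs_continuous_on a b phi ->
  {ae (@lebesgue_measure R), forall x : R, derivable phi x 1 /\ `|derive1 phi x| <= 1} ->
  a <= b -> 0 < eps -> `|phi b - phi a| <= (1 + eps) * (b - a) + eps.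
Proof.
move=> AC ae ab e0.
case: ae => N /= [mN N0 sub].
have [d d0 Hd] := AC eps e0.
have [U [oU NU Ud]] : exists U : set R,
    [/\ open U, N `<=` U & (lebesgue_measure (U `\` N) < d%:E)%E].
  apply: lebesgue_regularity_outer => //.
  apply: (@le_lt_trans _ _ 0%E); last exact: ltry.
  by rewrite le_eqVlt; apply/orP; left; apply/eqP; exact: N0.
have mU : measurable U by exact: measurable_realfun.open_measurable.
have Ud' : (lebesgue_measure U < d%:E)%E.
  apply: le_lt_trans Ud.
  have sU : U `<=` N `|` (U `\` N).
    by move=> y Uy; have [Ny|nNy] := pselect (N y); [left|right].
  have mUN : measurable (U `\` N) by apply: measurableD.
  have H1 : (lebesgue_measure U <= lebesgue_measure (N `|` (U `\` N)))%E.
    by apply: le_measure; rewrite ?inE //; apply: measurableU.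
  apply: (le_trans H1).
  rewrite measureU //; last first.
    by apply/seteqP; split => // y [Ny [_]].
  by rewrite [X in (X + _)%E](_ : _ = 0%E) ?add0e //; exact: N0.
pose G (x e : R) := (forall y, `|y - x| < e -> U y) \/
   (forall y, `|y - x| < e -> `|phi y - phi x| <= (1 + eps) * `|y - x|).
have HG : forall x, a <= x <= b -> exists2 e, 0 < e & G x e.
  move=> x _.
  have [Ux|nUx] := pselect (U x).
    have := oU x Ux; move/nbhs_ballP => [e e0' He].
    exists e => //; left => y yx; apply: He.
    by rewrite /ball /= distrC.
  have Px : derivable phi x 1 /\ `|derive1 phi x| <= 1.
    by apply: contrapT => nP; exact: nUx (NU _ (sub _ nP)).
  have [e e0' He] := loc_lip Px.1 e0.
  exists e => //; right => y yx.
  apply: (le_trans (He _ yx)); apply: ler_wpM2r => //.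
  by rewrite lerD2r; case: Px.
have [m [x [t [x0 xm Hi]]]] := cousin ab HG.
have xinc : forall i, (i < m)%N -> x i <= x i.+1.
  by move=> i im; have [h1 h2 _] := Hi i im; apply: le_trans h2.
have xa : forall i, (i <= m)%N -> a <= x i.
  elim=> [|i IH] im; first by rewrite x0.
  by apply: (le_trans (IH (ltnW im))); apply: xinc.
have xb : forall i, (i <= m)%N -> x i <= b.
  move=> i im; rewrite -(subKn im).
  elim: (m - i)%N (leq_subr i m) => [|k IH] km; first by rewrite subn0 xm.
  apply: le_trans (IH (ltnW km)).
  by rewrite -(subnSK km); apply: xinc; rewrite subnSK // leq_subr.
pose bad i := `[< `[x i, x i.+1] `<=` U >].
have goodb : forall i, (i < m)%N -> ~~ bad i ->
    `|phi (x i.+1) - phi (x i)| <= (1 + eps) * (x i.+1 - x i).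
  move=> i im nb.
  have [h1 h2 [e [Gl|Gr] [e1 e2]]] := Hi i im.
    exfalso; move/negP: nb; apply; apply/asboolP => y /=.
    rewrite in_itv /= => /andP[y1 y2]; apply: Gl.
    rewrite ltr_distlC; apply/andP; split; lra.
  have E : phi (x i.+1) - phi (x i) =
    (phi (x i.+1) - phi (t i)) - (phi (x i) - phi (t i)) by ring.
  rewrite E; apply: (le_trans (ler_normB _ _)).
  have d1 : `|x i.+1 - t i| = x i.+1 - t i by rewrite ger0_norm // subr_ge0.
  have d2 : `|x i - t i| = t i - x i by rewrite distrC ger0_norm // subr_ge0.
  have g1 := Gr (x i.+1) ltac:(by rewrite d1).
  have g2 := Gr (x i) ltac:(by rewrite d2).
  rewrite d1 in g1; rewrite d2 in g2.
  have -> : (1 + eps) * (x i.+1 - x i) = (1 + eps) * (x i.+1 - t i) + (1 + eps) * (t i - x i) by ring.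
  by apply: lerD.
pose t' i := if bad i then x i.+1 else x i.
have Hsum : \sum_(i < m) `|phi (t' i) - phi (x i)| < eps.
  apply: Hd.
  - move=> i im; split; first by apply: xa; apply: ltnW.
    rewrite /t'; case: (bad i); split.
    + exact: xinc.
    + exact: xb.
    + exact: lexx.
    + by apply: xb; apply: ltnW.
  - by move=> i im; rewrite /t'; case: (bad i) => //; apply: xinc; apply: ltnW.
  have := @sum_bad_le _ U x bad m oU xinc (fun i im bi => asboolW bi).
  move=> H; rewrite -lte_fin; apply: le_lt_trans Ud'; apply: le_trans H.
  rewrite lee_fin le_eqVlt; apply/orP; left; apply/eqP; apply: eq_bigr => i _.
  by rewrite /t'; case: (bad i) => //; rewrite subrr.
have tele : forall F : nat -> R, \sum_(i < m) (F i.+1 - F i) = F m - F 0%N.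
  by move=> F; rewrite -(big_mkord xpredT (fun i => F i.+1 - F i)) telescope_sumr.
have E : phi b - phi a = \sum_(i < m) (phi (x i.+1) - phi (x i)) by rewrite (tele (fun i => phi (x i))) xm x0.
rewrite E.
apply: (le_trans (ler_norm_sum _ _ _)).
apply: (le_trans (y := \sum_(i < m) (`|phi (t' i) - phi (x i)| + (1 + eps) * (x i.+1 - x i)))).
  apply: ler_sum => i _.
  rewrite /t'; case bi: (bad i).
    by rewrite lerDl mulr_ge0 // ?subr_ge0 ?xinc //; lra.
  by rewrite subrr normr0 add0r goodb // bi.
rewrite big_split /= -mulr_sumr (tele x) xm x0.
by rewrite addrC lerD2l ltW.
Qed.

Lemma lip_of_ae (phi : R -> R) :
  (forall a b, abs_continuous_on a b phi) ->
  {ae (@lebesgue_measure R), forall x : R, derivable phi x 1 /\ `|derive1 phi x| <= 1} ->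
  forall a b, a <= b -> `|phi b - phi a| <= b - a.
Proof.
move=> AC ae a b ab; apply/ler_addgt0Pr => e e0.
pose eps := e / (b - a + 2).
have den : 0 < b - a + 2 by lra.
have eps0 : 0 < eps by rewrite divr_gt0.
apply: (le_trans (lip_eps (AC a b) ae ab eps0)).
have : eps * (b - a + 2) = e by rewrite /eps divfK // gt_eqF.
have : 0 <= eps * (b - a) by rewrite mulr_ge0 ?subr_ge0 // ltW.
nra.
Qed.
End Lip.

Section RolleSeq.
Context {R : realType}.

Lemma rolle_path (F : R -> R) (a : R) (s : seq R) :
  (forall y, derivable F y 1) -> path <%R a s -> F a = 0 ->
  (forall z, z \in s -> F z = 0) ->
  exists s', [/\ path <%R a s', size s' = size s &
                 forall z, z \in s' -> derive1 F z = 0].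
Proof.
move=> dF; elim: s a => [|b s IH] a /=.
  by move=> _ _ _; exists [::].
move=> /andP[ab pb] Fa Fs.
have Fb : F b = 0 by apply: Fs; rewrite inE eqxx.
have [s' [ps' ss' zs']] := IH b pb Fb (fun z zs => Fs z ltac:(by rewrite inE zs orbT)).
have cF : {within `[a, b], continuous F}.
  apply: continuous_subspaceT => y.
  by apply: differentiable_continuous; apply/derivable1_diffP.
have [c cab dc] := Rolle ab (fun y _ => dF y) cF (etrans Fa (esym Fb)).
exists (c :: s'); split => //=.
- move: cab; rewrite in_itv /= => /andP[ac cb].
  rewrite ac /=; case: s' ps' {ss' zs'} => //= d s1 /andP[bd ->].
  by rewrite (lt_trans cb bd).
- by rewrite ss'.
- move=> z; rewrite inE => /orP[/eqP ->|/zs'] //.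
  by rewrite derive1E; apply: (@derive_val _ _ _ _ _ _ _ dc).
Qed.

Lemma rolle_seq (F : R -> R) (s : seq R) :
  (forall y, derivable F y 1) -> sorted <%R s ->
  (forall z, z \in s -> F z = 0) ->
  exists s', [/\ sorted <%R s', size s' = (size s).-1 &
                 forall z, z \in s' -> derive1 F z = 0].
Proof.
move=> dF; case: s => [|a s] /=; first by move=> _ _; exists [::].
move=> ps Fs.
have [s' [ps' ss' zs']] := rolle_path dF ps (Fs a (mem_head _ _))
   (fun z zs => Fs z ltac:(by rewrite inE zs orbT)).
by exists s'; split => //; apply: path_sorted ps'.
Qed.

Lemma rolle_iter (F : R -> R) (n : nat) (s : seq R) :
  (forall k, (k < n)%N -> forall y, derivable (derive1n k F) y 1) ->
  sorted <%R s -> (forall z, z \in s -> F z = 0) ->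
  exists s', [/\ sorted <%R s', size s' = (size s - n)%N &
                 forall z, z \in s' -> derive1n n F z = 0].
Proof.
elim: n => [|n IH] dF ss Fs; first by exists s; rewrite subn0.
have [s1 [ss1 sz1 z1]] := IH (fun k kn => dF k (ltnW kn)) ss Fs.
have [s2 [ss2 sz2 z2]] := rolle_seq (dF n (ltnSn n)) ss1 z1.
by exists s2; split => //; rewrite sz2 sz1 subnS.
Qed.
End RolleSeq.

Section PolyLow.
Context {R : realType}.
Lemma derivn_low (Q : {poly R}) (n : nat) (y : R) : (size Q <= n.+2)%N ->
  (Q^`(n)).[y] = Q`_n *+ n`! + Q`_n.+1 *+ (n.+1)`! * y.
Proof.
move=> sQ.
have -> : Q^`(n) = (Q`_n *+ n`!)%:P + (Q`_n.+1 *+ (n.+1)`!)%:P * 'X.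
  apply/polyP => i; rewrite coef_derivn coefD coefC coefMX coefC.
  case: i => [|[|i]] /=.
  - by rewrite addn0 ffactnn addr0.
  - rewrite addn1 add0r.
    by have := ffact_fact (leqnSn n); rewrite subSnn muln1 => ->.
  - rewrite add0r nth_default ?mul0rn //.
    by apply: leq_trans sQ _; rewrite addnS addnS !ltnS leq_addr.
by rewrite hornerD hornerC hornerMX hornerC.
Qed.
End PolyLow.

Section Lag.
Context {R : realType}.
Variables (t : nat -> R) (p : nat).
Hypothesis tinj : forall i j : 'I_p, i != j -> t i != t j.

Definition pl (i : 'I_p) : {poly R} := \prod_(j < p | j != i) ('X - (t j)%:P).
Definition lag (i : 'I_p) : {poly R} := ((pl i).[t i]^-1)%:P * pl i.

Lemma pl_horner i y : (pl i).[y] = \prod_(j < p | j != i) (y - t j).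
Proof. by rewrite /pl horner_prod; apply: eq_bigr => j _; rewrite hornerXsubC. Qed.

Lemma lag_sample (i j : 'I_p) : (lag i).[t j] = (i == j)%:R.
Proof.
rewrite /lag hornerM hornerC.
have [<-|neq_ij] /= := altP eqP.
  rewrite mulVf // pl_horner; apply/prodf_neq0 => k neq_ki.
  by rewrite subr_eq0; apply: tinj; rewrite eq_sym.
rewrite [X in _ * X]pl_horner (bigD1 j) 1?eq_sym //=.
by rewrite subrr mul0r mulr0.
Qed.

Lemma size_pl i : size (pl i) = p.
Proof.
rewrite /pl size_prod /=; last first.
  by move=> j neq_ji; rewrite polyXsubC_eq0.
rewrite (eq_bigr (fun=> (2 * 1)%N)); last first.
  by move=> j neq_ji; rewrite size_XsubC.
rewrite -big_distrr /= sum1_card cardC1 card_ord /=.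
by case: (p) i => [[]//|?] _; rewrite mul2n -addnn -addSn addnK.
Qed.

Lemma size_lag i : (size (lag i) <= p)%N.
Proof.
rewrite /lag; apply: leq_trans (size_mul_leq _ _) _.
rewrite size_pl; have := size_polyC_leq1 ((pl i).[t i]^-1).
by case: (size _) => [|[|]] //= _; rewrite ?leq_pred.
Qed.

Variable gv : nat -> R.
Definition Pint : {poly R} := \sum_(i < p) (gv i)%:P * lag i.

Lemma Pint_sample (j : 'I_p) : Pint.[t j] = gv j.
Proof.
rewrite /Pint horner_sum (bigD1 j) //= big1 ?addr0.
  by rewrite hornerM hornerC lag_sample eqxx mulr1.
by move=> i nij; rewrite hornerM hornerC lag_sample (negbTE nij) mulr0.
Qed.

Lemma size_Pint : (size Pint <= p)%N.
Proof.
rewrite /Pint; apply: (big_ind (fun q : {poly R} => (size q <= p)%N)).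
- by rewrite size_poly0.
- by move=> q1 q2 s1 s2; apply: leq_trans (size_polyD _ _) _; rewrite geq_max s1 s2.
- move=> i _; apply: leq_trans (size_mul_leq _ _) _.
  have := size_polyC_leq1 (gv i); have := size_lag i.
  by lia.
Qed.

Lemma prod_cst_C1 (i : 'I_p) (c : R) : \prod_(j < p | j != i) c = c ^+ p.-1.
Proof.
by rewrite (eq_bigl (fun j => j \in predC1 i)) // prodr_const cardC1 card_ord.
Qed.

Lemma lag_bound (i : 'I_p) (x h L : R) : 0 < h ->
  (forall j : 'I_p, j != i -> h <= `|t i - t j|) ->
  (forall j : 'I_p, `|x - t j| <= L) ->
  `|(lag i).[x]| <= L ^+ p.-1 / h ^+ p.-1.
Proof.
move=> h0 sep dist.
rewrite /lag hornerM hornerC normrM normfV mulrC.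
have hp : 0 < h ^+ p.-1 by rewrite exprn_gt0.
have d0 : 0 < `|(pl i).[t i]|.
  rewrite normr_gt0 pl_horner; apply/prodf_neq0 => k neq_ki.
  by rewrite subr_eq0; apply: tinj; rewrite eq_sym.
rewrite ler_pdivrMr // mulrAC ler_pdivlMr // .
apply: ler_pM.
- by [].
- by apply: ltW; rewrite exprn_gt0.
- rewrite pl_horner normr_prod -(prod_cst_C1 i L); apply: ler_prod => j _.
  by rewrite normr_ge0 dist.
- rewrite pl_horner normr_prod -(prod_cst_C1 i h); apply: ler_prod => j ji.
  by rewrite (ltW h0) sep.
Qed.
End Lag.

Section Interp.
Context {R : realType}.

Lemma interp_bound (g : R -> R) (n : nat) (h L x : R) (t : nat -> R) :
  (forall k, (k < n)%N -> forall y, derivable (derive1n k g) y 1) ->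
  (forall u v, `|derive1n n g v - derive1n n g u| <= `|v - u|) ->
  0 < h -> h <= L ->
  (forall i k, (i < n.+1)%N -> (k < n.+1)%N -> i != k -> h <= `|t i - t k|) ->
  (forall i, (i < n.+1)%N -> `|g (t i)| <= h ^+ n.+1) ->
  (forall i, (i < n.+1)%N -> `|x - t i| <= L) ->
  `|g x| <= L ^+ n.+1 / (n.+1)`!%:R + n.+1%:R * L ^+ n * h.
Proof.
move=> Hd HL h0 hL Hsep Hsmall Hdist.
set p := n.+1.
have L0 : 0 < L by apply: lt_le_trans hL.
have fact0 : (0 : R) < (p`!)%:R by rewrite ltr0n fact_gt0.
have tinj : forall i j : 'I_p, i != j -> t i != t j.
  move=> i j ij; apply/eqP => tij.
  have := Hsep i j (ltn_ord i) (ltn_ord j) ij.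
  by rewrite tij subrr normr0; lra.
have B2 : 0 <= L ^+ p / (p`!)%:R by rewrite divr_ge0 // ?exprn_ge0 // ltW.
have [[i ip xt]|xnt] := pselect (exists2 i, (i < p)%N & x = t i).
  rewrite xt; apply: (le_trans (Hsmall i ip)).
  suff H : h ^+ p <= p%:R * L ^+ n * h.
    by apply: (le_trans H); rewrite lerDr.
  rewrite /p exprSr ler_wpM2r ?(ltW h0) //.
  apply: (le_trans (y := L ^+ n)); first by rewrite lerXn2r // ?nnegrE ltW.
  rewrite ler_peMl ?exprn_ge0 ?(ltW L0) //.
  by rewrite ler1n.
have xnt' : forall i, (i < p)%N -> x != t i.
  by move=> i ip; apply/eqP => xt; apply: xnt; exists i.
pose P := Pint t p (fun i => g (t i)).
pose w : {poly R} := \prod_(i < p) ('X - (t i)%:P).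
have wx : w.[x] != 0.
  rewrite horner_prod; apply/prodf_neq0 => i _.
  by rewrite hornerXsubC subr_eq0 xnt'.
pose K := (g x - P.[x]) / w.[x].
pose Q := P + K%:P * w.
have sw : size w = p.+1.
  by rewrite /w size_prod_XsubC -[index_enum _]enumT size_enum_ord.
have sP : (size P <= p)%N by exact: size_Pint.
have sQ : (size Q <= n.+2)%N.
  apply: leq_trans (size_polyD _ _) _; rewrite geq_max; apply/andP; split.
    by apply: leq_trans sP _.
  apply: leq_trans (size_mul_leq _ _) _.
  by have := size_polyC_leq1 K; rewrite sw; lia.
have Qp : Q`_p = K.
  rewrite coefD coefCM nth_default // add0r.
  have : w \is monic by apply: monic_prod_XsubC.
  by move/monicP; rewrite /lead_coef sw /= => ->; rewrite mulr1.
pose e := fun y => g y - Q.[y].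
have de : forall k, (k <= n)%N ->
    derive1n k e = fun y => derive1n k g y - (Q^`(k)).[y].
  elim=> [_|k IH kn]; first by rewrite derivn0.
  rewrite [LHS]/= IH ?(ltnW kn) //; apply/funext => y.
  rewrite derive1E.
  rewrite (_ : (fun y0 => _) = derive1n k g - horner (Q^`(k))); last by apply/funext.
  rewrite deriveB; [|exact: Hd|exact: derivable_horner].
  rewrite -!derive1E -derivE derivnS //.
have dde : forall k, (k < n)%N -> forall y, derivable (derive1n k e) y 1.
  move=> k kn y; rewrite (de k (ltnW kn)).
  rewrite (_ : (fun y0 => _) = derive1n k g - horner (Q^`(k))); last by apply/funext.
  by apply: derivableB; [exact: Hd|exact: derivable_horner].
have ex0 : e x = 0.
  rewrite /e /Q hornerD hornerM hornerC /K divfK //; ring.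
have et0 : forall i, (i < p)%N -> e (t i) = 0.
  move=> i ip; rewrite /e /Q hornerD hornerM hornerC.
  have -> : w.[t i] = 0.
    rewrite horner_prod (bigD1 (Ordinal ip)) //= hornerXsubC subrr mul0r //.
  by rewrite mulr0 addr0 /P (@Pint_sample _ t p tinj _ (Ordinal ip)) ?subrr.
pose s := sort <=%R (x :: [seq t i | i <- iota 0 p]).
have ss : sorted <%R s.
  rewrite sort_lt_sorted cons_uniq; apply/andP; split.
    apply/negP; move/(@mapP _ _ _ _ _); case=> i; rewrite mem_iota add0n /= => ip xt.
    by move: (xnt' i ip); rewrite xt eqxx.
  rewrite map_inj_in_uniq ?iota_uniq // => i j; rewrite !mem_iota !add0n /= => ip jp tij.
  apply/eqP; apply/negPn/negP => ij.
  by have := tinj (Ordinal ip) (Ordinal jp) ij; rewrite /= tij eqxx.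
have zs : forall z, z \in s -> e z = 0.
  move=> z; rewrite mem_sort inE => /orP[/eqP ->//|/(@mapP _ _ _ _ _)[i]].
  by rewrite mem_iota add0n /= => ip ->; apply: et0.
have [s' [ss' sz' zs']] := rolle_iter dde ss zs.
have : size s' = 2%N by rewrite sz' size_sort /= size_map size_iota; lia.
case: s' ss' {sz'} zs' => [|u [|v [|? ?]]] //= /andP[uv _] zs' _.
have zu := zs' u (mem_head _ _).
have zv := zs' v ltac:(by rewrite !inE eqxx orbT).
rewrite (de n (leqnn n)) in zu zv.
move: zu zv; rewrite !derivn_low // Qp => zu zv.
have GK : derive1n n g v - derive1n n g u = K * (p`!)%:R * (v - u).
  move/eqP: zu; rewrite subr_eq0 => /eqP ->.
  move/eqP: zv; rewrite subr_eq0 => /eqP ->.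
  by rewrite opprD addrACA subrr add0r -mulrBr mulr_natr.
have Kb : `|K| * (p`!)%:R <= 1.
  have := HL u v; rewrite GK normrM normrM (gtr0_norm fact0) (gtr0_norm (x := v - u)) ?subr_gt0 //.
  have vu : 0 < v - u by rewrite subr_gt0.
  by move=> H; rewrite -(ler_pM2r vu) mul1r.
have gxE : g x = P.[x] + K * w.[x].
  by rewrite /K divfK //; ring.
rewrite gxE addrC; apply: (le_trans (ler_normD _ _)); apply: lerD.
  rewrite normrM.
  have wb : `|w.[x]| <= L ^+ p.
    have E : \prod_(i < p) L = L ^+ p by rewrite prodr_const card_ord.
    rewrite horner_prod normr_prod -E.
    by apply: ler_prod => i _; rewrite normr_ge0 hornerXsubC Hdist.
  have Kb' : `|K| <= (p`!%:R)^-1 by rewrite -(ler_pM2r fact0) mulVf ?gt_eqF.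
  apply: (le_trans (ler_pM (normr_ge0 _) (normr_ge0 _) Kb' wb)).
  by rewrite mulrC.
rewrite /P /Pint horner_sum; apply: (le_trans (ler_norm_sum _ _ _)).
apply: (le_trans (y := \sum_(i < p) (h ^+ p * (L ^+ n / h ^+ n)))).
  apply: ler_sum => i _; rewrite hornerM hornerC normrM.
  apply: ler_pM => //; first by apply: Hsmall.
  apply: (@lag_bound _ t p tinj) => //.
  - by move=> j ji; apply: Hsep => //; rewrite eq_sym.
  - by move=> j; apply: Hdist.
have E2 : h ^+ p * (L ^+ n / h ^+ n) = L ^+ n * h.
  rewrite /p exprS; have hn : h ^+ n != 0 by rewrite expf_neq0 // gt_eqF.
  move: hn; generalize (h ^+ n) (L ^+ n) => H M hn; field.
  by [].
by rewrite sumr_const card_ord E2 -mulrA mulr_natl.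
Qed.
End Interp.

Lemma Igrid_mem {R : realType} (n : nat) (m : int) (y : R) :
  y \in Igrid n m <-> - (m%:~R * hstep n) <= y <= - (m%:~R * hstep n) + hstep n.
Proof.
rewrite /Igrid /xgrid /hstep inE /= in_itv /= !mulrA.
have -> : ((m - 1)%:~R : R) = m%:~R - 1 by rewrite intrD.
by rewrite mulrBl mul1r mulrBl opprB addrC.
Qed.

Theorem lemma2 (R : realType) (r n : nat) (f : R -> R) :
  (2 <= r)%N -> (0 < n)%N -> W_class r f ->
  ~ (exists j : int, forall i : nat, (i <= 2 * r - 4)%N ->
        third_type r n f (j + i%:Z)).
Proof.
move=> r2 n0 [per Hder Hac Hae] [j Hj].
case: r r2 Hder Hac Hae Hj => [|[|q]] // _ Hder Hac Hae Hj.
have e1 : (q.+2 - 1 = q.+1)%N by lia.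
have e2 : (q.+2 - 2 = q)%N by lia.
have e3 : (2 * q.+2 - 3 = (2 * q).+1)%N by lia.
have e4 : (2 * q.+2 - 4 = 2 * q)%N by lia.
pose h : R := hstep n.
have h0 : 0 < h by rewrite /h /hstep divr_gt0 ?pi_gt0 // ltr0n.
pose g := derive1 f.
have Hd : forall k, (k < q)%N -> forall y, derivable (derive1n k g) y 1.
  by move=> k kq y; rewrite /g -derive1Sn; apply: Hder.
have lip := @lip_of_ae R (derive1n q.+1 f) (Hac) Hae.
have HL : forall u v, `|derive1n q g v - derive1n q g u| <= `|v - u|.
  move=> u v; rewrite /g -derive1Sn.
  case: (leP u v) => uv.
    rewrite (ger0_norm (x := v - u)) ?subr_ge0 //; exact: (lip u v uv).
  rewrite distrC (distrC v u) (ger0_norm (x := u - v)); last by rewrite subr_ge0 ltW.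
  exact: (lip v u (ltW uv)).
have pts : forall i, (i <= 2 * q)%N ->
    exists y, y \in Igrid n (j + i%:Z) /\ `|g y| < h ^+ q.+1.
  move=> i iq; have [nfirst nsecond] := Hj i ltac:(by rewrite e4).
  apply: contrapT => N; apply: nsecond; split => // y yI.
  rewrite e1 leNgt; apply/negP => lt; apply: N; exists y; split => //.
have Hch : forall k, exists y, (k <= q)%N ->
    y \in Igrid n (j + (2 * k)%N%:Z) /\ `|g y| < h ^+ q.+1.
  move=> k; case: (leqP k q) => kq.
    have [y Hy] := pts (2 * k)%N ltac:(by rewrite leq_mul2l kq orbT).
    by exists y.
  by exists 0.
have [t Ht] := choice Hch.
pose J : R := j%:~R * h.
pose D (k : nat) : R := (2 * k)%N%:R * h.
have tb : forall k, (k <= q)%N -> - (J + D k) <= t k <= - (J + D k) + h.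
  move=> k kq; have [/Igrid_mem + _] := Ht k kq.
  by move=> H; rewrite intrD mulrDl in H; exact: H.
have Dmono : forall i k, (i < k)%N -> D i + 2 * h <= D k.
  move=> i k ik; rewrite /D -mulrDl ler_wpM2r ?(ltW h0) //.
  by rewrite -natrD ler_nat; lia.
have Dle : forall k, (k <= q)%N -> 0 <= D k <= (2 * q)%N%:R * h.
  move=> k kq; rewrite /D mulr_ge0 ?ler0n ?(ltW h0) //=.
  by rewrite ler_wpM2r ?(ltW h0) // ler_nat; lia.
have sep1 : forall i k, (i < k)%N -> (k <= q)%N -> h <= t i - t k.
  move=> i k ik kq.
  have := tb i (ltnW (leq_trans ik kq)); have := tb k kq; have := Dmono i k ik.
  move=> /= H1 /andP[H2 H3] /andP[H4 H5]; lra.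
have Hsep : forall i k, (i < q.+1)%N -> (k < q.+1)%N -> i != k -> h <= `|t i - t k|.
  move=> i k iq kq; rewrite neq_ltn => /orP[ik|ki].
    by apply: (le_trans (sep1 i k ik kq)); apply: ler_norm.
  by rewrite distrC; apply: (le_trans (sep1 k i ki iq)); apply: ler_norm.
have Hsmall : forall i, (i < q.+1)%N -> `|g (t i)| <= h ^+ q.+1.
  by move=> i iq; apply: ltW; case: (Ht i iq).
have [nfirst _] := Hj 0%N ltac:(by []).
apply: nfirst; rewrite addr0 => x /Igrid_mem xI.
pose L : R := (2 * q).+1%:R * h.
have hL : h <= L by rewrite /L ler_peMl ?(ltW h0) // ler1n.
have Hdist : forall i, (i < q.+1)%N -> `|x - t i| <= L.
  move=> i iq; have := tb i iq; have := Dle i iq; move: xI.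
  have -> : L = (2 * q)%N%:R * h + h by rewrite /L -addn1 natrD mulrDl mul1r.
  rewrite -/h -/J ler_norml => /andP[x1 x2] /andP[d1 d2] /andP[t1 t2].
  apply/andP; split; lra.
have := interp_bound Hd HL h0 hL Hsep Hsmall Hdist.
move=> H; apply: (le_trans H) => {H}.
rewrite /c1 e1 e2 e3 -/h /L.
set a : R := (2 * q).+1%:R.
set F : R := (q.+1)`!%:R.
set Qn : R := q.+1%:R.
rewrite !exprMn !exprS le_eqVlt; apply/orP; left; apply/eqP; rewrite /h /hstep; ring.
Qed.
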